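(* Let $m>1$, $p\equiv1\pmod m$ an odd prime, and $r$ an integer whose class in $(\mathbb Z/p\mathbb Z)^\times$ has order $m$; let $s$ be an integer with $rs\equiv1\pmod p$. Let $L/F$ be a Galois extension of number fields with $\mathrm{Gal}(L/F)=\langle\sigma,\tau:\sigma^p=\tau^m=1,\ \tau^{-1}\sigma\tau=\sigma^r\rangle$, and let $k$ be the fixed field of $\langle\sigma\rangle$. Then the map $\theta:\mathrm{Am}\to (E_k\cap N_{L/k}L^\times)/N_{L/k}E_L$ satisfies $\theta(c^\tau)=\theta(c)^{s\tau}$ for all $c\in\mathrm{Am}$.
   Context: $\mathrm{Am}=\{c\in\mathrm{Cl}_p(L):c^\sigma=c\}$, where $\mathrm{Cl}_p(L)$ is the Sylow $p$-subgroup of the class group of $L$; $E_M$ is the unit group of $M$. For $c\in\mathrm{Am}$ choose an ideal $\mathfrak a\in c$, write $\mathfrak a^{\sigma-1}=(\alpha)$ with $\alpha\in L^\times$; then $\theta(c)=N_{L/k}(\alpha)\cdot N_{L/k}E_L$ (well defined). The group $(E_k\cap N_{L/k}L^\times)/N_{L/k}E_L$ has exponent $p$ and $\tau$ acts on it; $x^{s\tau}$ means $(x^s)^\tau$. *)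

(* Defs.v *)
From HB Require Import structures.
From mathcomp Require Import all_boot all_order all_algebra all_fingroup all_field.
Set Implicit Arguments. Unset Strict Implicit. Unset Printing Implicit Defensive.
Import GRing.Theory Num.Theory.
Local Open Scope ring_scope.

(* Number fields are modelled as subfields L of an ambient finite Galois
   extension M of Q (M : splittingFieldType rat); every number field embeds
   in such an M (e.g. its Galois closure). *)

Section NF.
Variable M : splittingFieldType rat.

Definition alg_int (x : M) : Prop :=
  exists q : {poly int}, q \is monic /\ root (map_poly (fun z : int => z%:~R) q) x.

Definition in_OK (E : {vspace M}) (x : M) : Prop := x \in E /\ alg_int x.

Definition in_units (E : {vspace M}) (x : M) : Prop :=
  x != 0 /\ in_OK E x /\ in_OK E x^-1.

Definition idl (E : {vspace M}) (gs : seq M) : M -> Prop :=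
  fun x => exists cs : seq M, size cs = size gs /\ (forall c, c \in cs -> in_OK E c)
     /\ x = \sum_(i < size gs) cs`_i * gs`_i.

Definition frac_gens (E : {vspace M}) (gs : seq M) : Prop :=
  all (fun g => g \in E) gs /\ has (fun g => g != 0) gs.

Definition idl_eq (E : {vspace M}) (gs hs : seq M) : Prop :=
  forall x, idl E gs x <-> idl E hs x.

Fixpoint pow_gens (gs : seq M) (n : nat) : seq M :=
  if n is n'.+1 then [seq x * y | x <- gs, y <- pow_gens gs n'] else [:: 1].

Definition principal (E : {vspace M}) (gs : seq M) : Prop :=
  exists b : M, b \in E /\ b != 0 /\ idl_eq E gs [:: b].

End NF.

(* Main.v *)
Require Import Defs.
From HB Require Import structures.
From mathcomp Require Import all_boot all_order all_algebra all_fingroup all_field.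
Import GRing.Theory Num.Theory.
Local Open Scope ring_scope.
Set Implicit Arguments. Unset Strict Implicit.
Section S.
Variable M : splittingFieldType rat.
Let ZM : {rmorphism int -> M} := intr.
Lemma alg_intE (x : M) : alg_int x <-> integralOver ZM x.
Proof. split=> [[q [mq rq]] | [q mq rq]]; by exists q. Qed.

Definition Pint (q : {poly M}) := forall k, integralOver ZM q`_k.
Lemma Pint_add q1 q2 : Pint q1 -> Pint q2 -> Pint (q1 + q2).
Proof. by move=> h1 h2 k; rewrite coefD; apply: integral_add. Qed.
Lemma Pint_C c : integralOver ZM c -> Pint c%:P.
Proof. by move=> h k; rewrite coefC; case: eqP => _ //; apply: integral0. Qed.
Lemma Pint_mul q1 q2 : Pint q1 -> Pint q2 -> Pint (q1 * q2).
Proof.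
move=> h1 h2 k; rewrite coefM; apply: (big_ind (integralOver ZM)).
- exact: integral0.
- exact: integral_add.
by move=> i _; apply: integral_mul.
Qed.
Lemma Pint_opp q : Pint q -> Pint (- q).
Proof. by move=> h k; rewrite coefN; apply: integral_opp. Qed.
Lemma Pint_X : Pint 'X.
Proof. by move=> k; rewrite coefX; case: eqP => _; [apply: integral1|apply: integral0]. Qed.

Lemma char_poly_int n (A : 'M[M]_n) :
  (forall i j, integralOver ZM (A i j)) -> Pint (char_poly A).
Proof.
move=> hA; rewrite /char_poly /determinant.
apply: (big_ind Pint); [rewrite -polyC0; apply: Pint_C; exact: integral0 | exact: Pint_add|].
move=> s _; apply: Pint_mul.
  elim: (odd_perm s) => //=; [rewrite expr1; apply: Pint_opp; (apply: Pint_C; exact: integral1)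
     | rewrite expr0; (apply: Pint_C; exact: integral1)].
apply: (big_ind Pint); [rewrite -polyC1; (apply: Pint_C; exact: integral1) | exact: Pint_mul|].
move=> i _; rewrite !mxE; apply: Pint_add.
  case: (i == s i); rewrite ?mulr1n ?mulr0n; [exact: Pint_X | (apply: Pint_C; exact: integral0)].
by apply: Pint_opp; apply: Pint_C.
Qed.
Lemma stab_integral (hs : seq M) (z : M) :
  has (fun g => g != 0) hs ->
  (forall j : 'I_(size hs), exists c : 'I_(size hs) -> M,
     (forall i, integralOver ZM (c i)) /\ z * hs`_j = \sum_i c i * hs`_i) ->
  integralOver ZM z.
Proof.
move=> nz /fin_all_exists[C HC].
pose A : 'M[M]_(size hs) := \matrix_(i, j) C j i.
pose v : 'rV[M]_(size hs) := \row_i hs`_i.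
have vA : v *m A = z *: v.
  apply/rowP=> j; rewrite !mxE (proj2 (HC j)); apply: eq_bigr => i _.
  by rewrite !mxE mulrC.
have vnz : v != 0.
  case/hasP: nz => g /(nthP 0)[i lti <-] gnz; apply/eqP => /rowP /(_ (Ordinal lti)).
  by rewrite !mxE => /eqP; rewrite (negPf gnz).
have: root (char_poly A) z by rewrite -eigenvalue_root_char; apply/eigenvalueP; exists v.
move=> rt; apply: (integral_root_monic (char_poly_monic A) rt).
apply/integral_poly; apply: char_poly_int => i j; rewrite mxE; exact: (proj1 (HC j)).
Qed.
Variable L : {subfield M}.

Lemma OK_add a b : in_OK L a -> in_OK L b -> in_OK L (a + b).
Proof. move=> [ha ia] [hb ib]; split; first exact: rpredD.
by apply/alg_intE; apply: integral_add; apply/alg_intE. Qed.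
Lemma OK_mul a b : in_OK L a -> in_OK L b -> in_OK L (a * b).
Proof. move=> [ha ia] [hb ib]; split; first exact: rpredM.
by apply/alg_intE; apply: integral_mul; apply/alg_intE. Qed.
Lemma OK0 : in_OK L 0.
Proof. split; first exact: rpred0. by apply/alg_intE; apply: integral0. Qed.
Lemma OK1 : in_OK L 1.
Proof. split; first exact: rpred1. by apply/alg_intE; apply: integral1. Qed.

Lemma OK_gal (f : gal_of L) a : in_OK L a -> in_OK L (f a).
Proof.
move=> [ha [q [mq rq]]]; split; first exact: memv_gal.
exists q; split=> //; have := rmorph_root f rq.
rewrite -map_poly_comp; congr (root _ _); apply: eq_map_poly => z /=.
by rewrite rmorph_int.
Qed.

Fixpoint idlR (gs : seq M) (x : M) : Prop :=
  if gs is g :: gs' then exists c y, [/\ in_OK L c, idlR gs' y & x = c * g + y]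
  else x = 0.

Lemma idlP gs x : idl L gs x <-> idlR gs x.
Proof.
elim: gs x => [|g gs IH] x /=.
  split=> [[cs [_ [_ ->]]]|->]; first by rewrite big_ord0.
  by exists [::]; split=> //; split=> //; rewrite big_ord0.
split.
  move=> [[|c cs] [//= [sz] [hc ->]]]; rewrite big_ord_recl /=.
  exists c, (\sum_(i < size gs) cs`_i * gs`_i); split=> //.
    by apply: hc; rewrite mem_head.
  apply/IH; exists cs; split=> //; split=> // d hd; apply: hc.
  by rewrite inE hd orbT.
move=> [c [y [hc /IH [cs [sz [hcs ->]]] ->]]].
exists (c :: cs); split; first by rewrite /= sz.
split; first by move=> d; rewrite inE => /orP[/eqP->|/hcs].
by rewrite big_ord_recl.
Qed.

Lemma idlR0 gs : idlR gs 0.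
Proof. elim: gs => //= g gs IH; exists 0, 0; split=> //; [exact: OK0|by rewrite mul0r addr0]. Qed.

Lemma idlR_add gs x y : idlR gs x -> idlR gs y -> idlR gs (x + y).
Proof.
elim: gs x y => [|g gs IH] x y /=; first by move=> -> ->; rewrite addr0.
move=> [c [x' [hc hx ->]]] [d [y' [hd hy ->]]].
exists (c + d), (x' + y'); split; [exact: OK_add|exact: IH|].
by rewrite mulrDl addrACA.
Qed.

Lemma idlR_mul gs a x : in_OK L a -> idlR gs x -> idlR gs (a * x).
Proof.
move=> ha; elim: gs x => [|g gs IH] x /=; first by move=> ->; rewrite mulr0.
move=> [c [x' [hc hx ->]]]; exists (a * c), (a * x'); split.
- exact: OK_mul. - exact: IH. - by rewrite mulrDr mulrA.
Qed.

Lemma idlR_mem gs g : g \in gs -> idlR gs g.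
Proof.
elim: gs => //= h gs IH; rewrite inE => /orP[/eqP->|/IH hg].
  by exists 1, 0; split; [exact: OK1|exact: idlR0|rewrite mul1r addr0].
by exists 0, g; split; [exact: OK0| |rewrite mul0r add0r].
Qed.

Lemma idlR_sub hs ks x : (forall h, h \in hs -> idlR ks h) -> idlR hs x -> idlR ks x.
Proof.
elim: hs x => [|h hs IH] x hk /=; first by move=> ->; exact: idlR0.
move=> [c [x' [hc hx ->]]]; apply: idlR_add.
  by apply: idlR_mul => //; apply: hk; rewrite mem_head.
by apply: IH => // h' hh; apply: hk; rewrite inE hh orbT.
Qed.

Lemma idlR_gal (f : gal_of L) gs x : idlR gs x -> idlR (map f gs) (f x).
Proof.
elim: gs x => [|g gs IH] x /=; first by move=> ->; rewrite rmorph0.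
move=> [c [x' [hc hx ->]]]; exists (f c), (f x'); split.
- exact: OK_gal. - exact: IH. - by rewrite rmorphD rmorphM.
Qed.

Lemma idlR_scale a gs x : idlR gs x -> idlR (map (fun z => a * z) gs) (a * x).
Proof.
elim: gs x => [|g gs IH] x /=; first by move=> ->; rewrite mulr0.
move=> [c [x' [hc hx ->]]]; exists c, (a * x'); split => //.
- exact: IH. - by rewrite mulrDr mulrCA.
Qed.

Lemma idlR_unscale a gs x : a != 0 -> idlR (map (fun z => a * z) gs) x -> idlR gs (x / a).
Proof.
move=> anz; elim: gs x => [|g gs IH] x /=; first by move=> ->; rewrite mul0r.
move=> [c [x' [hc hx ->]]]; exists c, (x' / a); split => //.
- exact: IH. - by rewrite mulrDl [c * _]mulrCA mulrAC divff // mul1r.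
Qed.

Lemma idlR_inL gs x : all (fun g => g \in L) gs -> idlR gs x -> x \in L.
Proof.
elim: gs x => [|g gs IH] x /=; first by move=> _ ->; exact: rpred0.
move=> /andP[hg hgs] [c [x' [[hc _] hx ->]]]; rewrite rpredD ?rpredM //; exact: IH.
Qed.
Definition allL (gs : seq M) := all (fun g => g \in L) gs.

Lemma idl_eqP hs ks : idl_eq L hs ks <-> (forall x, idlR hs x <-> idlR ks x).
Proof.
split=> h x; split => hx.
- by apply/idlP; apply/h; apply/idlP.
- by apply/idlP; apply/h; apply/idlP.
- by apply/idlP; apply/h; apply/idlP.
- by apply/idlP; apply/h; apply/idlP.
Qed.

Lemma gal_inv_id (f : gal_of L) a : a \in L -> (f^-1)%g (f a) = a.
Proof. by move=> ha; rewrite -galM // mulgV gal_id. Qed.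
Lemma gal_id_inv (f : gal_of L) a : a \in L -> f ((f^-1)%g a) = a.
Proof. by move=> ha; rewrite -galM // mulVg gal_id. Qed.

Lemma allL_map (f : gal_of L) hs : allL hs -> allL (map f hs).
Proof. by move=> /allP h; apply/allP => _ /mapP[z hz ->]; apply: memv_gal; apply: h. Qed.

Lemma map_gal_inv (f : gal_of L) hs : allL hs -> map (f^-1)%g (map f hs) = hs.
Proof.
move=> /allP h; rewrite -map_comp -[RHS]map_id; apply/eq_in_map => z hz /=.
by rewrite gal_inv_id // h.
Qed.

Lemma idl_sub_gal (f : gal_of L) hs ks x : allL hs ->
  (forall y, idlR hs y -> idlR ks y) -> idlR (map f hs) x -> idlR (map f ks) x.
Proof.
move=> hL hsub hx.
have xL : x \in L by apply: idlR_inL hx; apply: allL_map.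
have := @idlR_gal (f^-1)%g _ _ hx; rewrite map_gal_inv // => /hsub /(idlR_gal f).
by rewrite gal_id_inv.
Qed.

Lemma idl_eq_gal (f : gal_of L) hs ks : allL hs -> allL ks ->
  idl_eq L hs ks -> idl_eq L (map f hs) (map f ks).
Proof.
move=> hL kL /idl_eqP h; apply/idl_eqP => x; split; apply: idl_sub_gal => // y; by case: (h y).
Qed.

Lemma idl_eq_scale a hs ks : a != 0 -> idl_eq L hs ks ->
  idl_eq L (map (fun z => a * z) hs) (map (fun z => a * z) ks).
Proof.
move=> anz /idl_eqP h; apply/idl_eqP => x.
have ex : x = a * (x / a) by rewrite mulrC divfK.
split=> /(@idlR_unscale a _ _ anz) /h /(@idlR_scale a); by rewrite -ex.
Qed.

Lemma idl_eq_trans hs ks ls : idl_eq L hs ks -> idl_eq L ks ls -> idl_eq L hs ls.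
Proof. move=> h1 h2 x; have := h1 x; have := h2 x; tauto. Qed.
Lemma idl_eq_sym hs ks : idl_eq L hs ks -> idl_eq L ks hs.
Proof. move=> h x; have := h x; tauto. Qed.

Lemma cancel_int hs x y : allL hs -> has (fun g => g != 0) hs -> y != 0 ->
  idl_eq L (map (fun z => x * z) hs) (map (fun z => y * z) hs) ->
  integralOver ZM (x / y).
Proof.
move=> hL nz ynz /idl_eqP h; apply: (@stab_integral hs (x / y) nz) => j.
have : idlR (map (fun z => x * z) hs) (x * hs`_j).
  by apply: idlR_mem; apply: (map_f (fun z => x * z)); apply: mem_nth.
move=> /h /(@idlR_unscale y _ _ ynz) /idlP [cs [sz [hcs ecs]]].
exists (fun i => cs`_i); split.
  move=> i; apply/alg_intE; apply: (proj2 (hcs _ _)); apply: mem_nth; rewrite sz.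
  exact: ltn_ord.
by rewrite mulrAC.
Qed.

Lemma cancel_unit hs x y : allL hs -> has (fun g => g != 0) hs ->
  x \in L -> y \in L -> x != 0 -> y != 0 ->
  idl_eq L (map (fun z => x * z) hs) (map (fun z => y * z) hs) ->
  in_units L (x / y).
Proof.
move=> hL nz xL yL xnz ynz h; split; first by rewrite mulf_neq0 ?invr_eq0.
split; split.
- exact: rpred_div.
- by apply/alg_intE; apply: cancel_int h.
- by rewrite invf_div; apply: rpred_div.
- by rewrite invf_div; apply/alg_intE; apply: (@cancel_int hs y x hL nz xnz); exact: idl_eq_sym h.
Qed.

Lemma units_mul a b : in_units L a -> in_units L b -> in_units L (a * b).
Proof.
move=> [an [ha ha']] [bn [hb hb']]; split; first by rewrite mulf_neq0.
by split; [exact: OK_mul | rewrite invfM; exact: OK_mul].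
Qed.
Lemma units_inv a : in_units L a -> in_units L a^-1.
Proof. by move=> [an [ha ha']]; split; [rewrite invr_eq0 | rewrite invrK]. Qed.
Lemma units_gal (f : gal_of L) a : in_units L a -> in_units L (f a).
Proof.
move=> [an [ha ha']]; split; first by rewrite fmorph_eq0.
by split; [exact: OK_gal | rewrite -fmorphV; exact: OK_gal].
Qed.
Lemma units1 : in_units L 1.
Proof. by split; [exact: oner_neq0 | rewrite invr1; split; exact: OK1]. Qed.
Lemma units_expn a n : in_units L a -> in_units L (a ^+ n).
Proof. move=> ha; elim: n => [|n IH]; [exact: units1 | rewrite exprS; exact: units_mul]. Qed.
Lemma units_exprz a (n : int) : in_units L a -> in_units L (a ^ n).
Proof. by move=> ha; case: n => n; rewrite ?NegzE; [exact: units_expn | apply: units_inv; exact: units_expn]. Qed.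
End S.
Unset Implicit Arguments. Set Strict Implicit.
Lemma hmod (p : nat) (r s : int) : (1 < p)%N -> (r * s - 1 \in dvdz p) ->
  ((absz (r %% p)%Z * absz (s %% p)%Z) %% p = 1)%N.
Proof.
move=> p1 hd.
have pnz : (p : int) != 0 by rewrite eqz_nat; case: (p) p1.
apply/eqP; rewrite -eqz_nat -modz_nat PoszM.
rewrite !gez0_abs ?modz_ge0 //.
have -> : ((r %% p)%Z * (s %% p)%Z = r * s %[mod p])%Z by rewrite modzMm.
have : (r * s == 1 %[mod p])%Z by rewrite eqz_mod_dvd.
move=> /eqP ->; rewrite modz_small //; by [].

Qed.

Lemma galNormXz (M : splittingFieldType rat) (U V : {vspace M}) (x : M) (n : int) :
  galNorm U V (x ^ n) = galNorm U V x ^ n.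
Proof. by case: n => n /=; rewrite ?galNormV galNormX. Qed.

Lemma galXz (M : splittingFieldType rat) (L : {subfield M}) (f : gal_of L) (x : M) (n : int) :
  f (x ^ n) = f x ^ n.
Proof. by case: n => n /=; rewrite ?fmorphV rmorphXn. Qed.

Theorem mainTheorem8
  (m p : nat) (r s : int)
  (Hm : (1 < m)%N) (Hp : prime p) (Hpodd : odd p) (HpM : (p = 1 %[mod m])%N)
  (Hord : forall j : nat, (0 < j)%N ->
            ((r ^+ j - 1 \in dvdz p) = (m %| j)%N))
  (Hrs : (r * s - 1 \in dvdz p))
  (M : splittingFieldType rat) (F L : {subfield M})
  (HFL : galois F L)
  (sigma tau : gal_of L)
  (Hgen : ('Gal(L / F))%g = <<[set sigma; tau]>>%g)
  (Hord_G : #|('Gal(L / F))%g| = (p * m)%N)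
  (Hsp : (sigma ^+ p = 1)%g) (Htm : (tau ^+ m = 1)%g)
  (Hrel : (sigma ^ tau = sigma ^+ absz (r %% (p : int))%Z)%g) :
  let k : {vspace M} := fixedField <[sigma]>%g in
  forall gs : seq M, frac_gens L gs ->
  (exists n : nat, principal L (pow_gens gs (p ^ n))) ->
  forall alpha beta : M, alpha \in L -> alpha != 0 -> beta \in L -> beta != 0 ->
  idl_eq L (map sigma gs) (map (fun x => alpha * x) gs) ->
  idl_eq L (map sigma (map tau gs)) (map (fun x => beta * x) (map tau gs)) ->
  exists u : M, in_units L u /\
    galNorm k L beta = tau ((galNorm k L alpha) ^ s) * galNorm k L u.
Proof.
move=> k gs [gsL gsnz] _ alpha beta aL anz bL bnz H1 H2.
have gsL' : allL L gs by [].
have galk : 'Gal(L / k)%g = <[sigma]>%g by exact: (gal_fixedField <[sigma]>%G).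
pose N x := galNorm k L x.
have Nsig x : x \in L -> N (sigma x) = N x.
  move=> xL; apply: (@galNorm_gal _ _ (fixedField_aspace <[sigma]>%g)) => //.
  by rewrite galk cycle_id.
have conj_act g z : z \in L -> (g ^ tau)%g (tau z) = tau (g z).
  move=> zL; rewrite conjgE galM ?memv_gal // galM ?memv_gal //.
  by rewrite gal_inv_id.
have tauN : (tau \in 'N(<[sigma]>))%g.
  apply/normP; apply/eqP; rewrite eqEcard cardJg leqnn andbT -cycleJ Hrel.
  exact: cycleX.
have Ntau x : x \in L -> N (tau x) = tau (N x).
  move=> xL; rewrite /N /galNorm galk rmorph_prod.
  rewrite (reindex_acts 'J _ tauN); last by apply/subsetP => y; rewrite astabsJ.
  by apply: eq_bigr => g _; rewrite /= conj_act.
have p1 : (1 < p)%N by exact: prime_gt1.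
set e := absz (r %% (p : int))%Z in Hrel.
pose s' := absz (s %% (p : int))%Z.
have hes : ((e * s') %% p = 1)%N by exact: hmod.
have sig_es : ((sigma ^+ s') ^ tau = sigma)%g.
  by rewrite conjXg Hrel -expgM -(expg_mod _ Hsp) hes expg1.
have rel z : z \in L -> sigma (tau z) = tau ((sigma ^+ s')%g z).
  by move=> zL; rewrite -conj_act // sig_es.
pose gam j := iter j (fun c => alpha * sigma c) 1.
have claim j : [/\ gam j \in L, gam j != 0, N (gam j) = N alpha ^+ j &
   idl_eq L (map (sigma ^+ j)%g gs) (map (fun z => gam j * z) gs)].
  elim: j => [|j [gL gnz gN gI]].
    split; [exact: rpred1 | exact: oner_neq0 | exact: galNorm1 |].
    rewrite (@eq_map _ _ _ id); last by move=> z; rewrite /= gal_id.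
    rewrite (@eq_map _ _ (fun z => gam 0%N * z) id); last by move=> z; rewrite /= mul1r.
    by move=> x.
  have gS : gam j.+1 = alpha * sigma (gam j) by [].
  split.
  - by rewrite gS rpredM // memv_gal.
  - by rewrite gS mulf_neq0 // fmorph_eq0.
  - by move: (Nsig _ gL) gN; rewrite /N => h1 h2; rewrite gS galNormM h1 h2 exprS.
  have -> : map (sigma ^+ j.+1)%g gs = map sigma (map (sigma ^+ j)%g gs).
    rewrite -map_comp; apply/eq_in_map => z zin /=.
    by rewrite expgSr galM //; apply: (allP gsL).
  have hL1 : allL L (map (sigma ^+ j)%g gs) by apply: allL_map.
  have hL2 : allL L (map (fun z => gam j * z) gs).
    by apply/allP => _ /mapP[z zin ->]; rewrite rpredM //; apply: (allP gsL).
  apply: idl_eq_trans (idl_eq_gal sigma hL1 hL2 gI) _.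
  have -> : map sigma (map (fun z => gam j * z) gs) =
            map (fun z => sigma (gam j) * z) (map sigma gs).
    by rewrite -!map_comp; apply/eq_map => z /=; rewrite rmorphM.
  apply: idl_eq_trans (idl_eq_scale _ H1) _; first by rewrite fmorph_eq0.
  rewrite -map_comp; have -> : map ((fun z => sigma (gam j) * z) \o (fun x => alpha * x)) gs =
     map (fun z => gam j.+1 * z) gs by apply/eq_map => z /=; rewrite mulrCA mulrA.
  by move=> x.
have [u0L u0nz u0N u0I] := claim p.
have u0U : in_units L (gam p).
  have := @cancel_unit _ L gs 1 (gam p) gsL' gsnz (rpred1 _) u0L (oner_neq0 _) u0nz.
  rewrite Hsp in u0I.
  have e1 : map (1%g : gal_of L) gs = gs by rewrite (@eq_map _ _ _ id) ?map_id // => z; rewrite /= gal_id.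
  have e2 : map (fun z => 1 * z) gs = gs by rewrite (@eq_map _ _ _ id) ?map_id // => z; rewrite /= mul1r.
  rewrite e2; rewrite e1 in u0I; move=> /(_ u0I) /units_inv; by rewrite div1r invrK.
have [gL gnz gN gI] := claim s'.
pose T := map tau gs.
have TL : allL L T by apply: allL_map.
have Tnz : has (fun g => g != 0) T.
  by rewrite has_map; apply: sub_has gsnz => z /=; rewrite fmorph_eq0.
have hL2 : allL L (map (fun z => gam s' * z) gs).
  by apply/allP => _ /mapP[z zin ->]; rewrite rpredM //; apply: (allP gsL).
have hI := idl_eq_gal tau (allL_map _ gsL') hL2 gI.
have el : map tau (map (sigma ^+ s')%g gs) = map sigma T.
  rewrite -!map_comp; apply/eq_in_map => z zin /=; rewrite rel //; exact: (allP gsL).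
have er : map tau (map (fun z => gam s' * z) gs) = map (fun z => tau (gam s') * z) T.
  by rewrite -!map_comp; apply/eq_map => z /=; rewrite rmorphM.
rewrite el er in hI.
have hB := idl_eq_trans (idl_eq_sym H2) hI.
have tgL : tau (gam s') \in L by exact: memv_gal.
have tgnz : tau (gam s') != 0 by rewrite fmorph_eq0.
have vU := cancel_unit TL Tnz bL tgL bnz tgnz hB.
set v := beta / tau (gam s') in vU.
pose t := (s %/ (p : int))%Z.
exists (v * (tau (gam p)) ^ (- t)); split.
  by apply: units_mul => //; apply: units_exprz; apply: units_gal.
have ebeta : beta = v * tau (gam s') by rewrite /v divfK.
have Na_nz : N alpha != 0 by rewrite /N galNorm_eq0.
move: (Ntau _ u0L) (Ntau _ gL) u0N gN Na_nz; rewrite /N => h1 h2 h3 h4 h5.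
have Nb : galNorm k L beta = galNorm k L v * galNorm k L (tau (gam s')).
  by rewrite -galNormM -ebeta.
rewrite Nb [galNorm k L (v * _)]galNormM galNormXz h1 h2 h3 h4 galXz.
set a := galNorm k L alpha in h5 *.
have bnz' : tau a != 0 by rewrite fmorph_eq0.
rewrite !rmorphXn.
have hs : s = t * (p : int) + (s' : int).
  have pnz : (p : int) != 0 by rewrite eqz_nat; case: (p) p1.
  by rewrite /t /s' gez0_abs ?modz_ge0 //; exact: divz_eq.
have bU : tau a \is a GRing.unit by rewrite unitfE.
rewrite hs exprzDr // (mulrC t) -exprz_exp.
set c := tau a ^+ p.
have ec : tau a ^ (p : int) = c by [].
rewrite ec.
have cU : c \is a GRing.unit by rewrite unitrX.
have hc : c ^ t * c ^ (- t) = 1 by rewrite -exprzDr // subrr expr0z.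
set b := tau a.
set Nv := galNorm k L v.
transitivity (Nv * b ^+ s' * (c ^ t * c ^ (- t))); first by rewrite hc mulr1.
rewrite -[b ^+ s']/(b ^ (s' : int)).
rewrite -/(b ^ (s' : int)).
move: (Nv) (b ^ (s' : int)) (c ^ t) (c ^ (- t)) => X Y Z W.
by rewrite [LHS]mulrACA [RHS]mulrACA (mulrC Z).
Qed.
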